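(* Let $L>0$, $\xi_{\mathrm{L}}<0$, $a>0$, $b>0$, and fix $d_w$ with $0<d_w\le L$. Then the maximizer over $\theta_w\in[0,\pi/2]$ of $\theta_w\mapsto f(d_w,\theta_w)$ is unique; denoting it by $\theta_w^\circ(d_w)$, it is the unique solution in $\theta_w$ of $$\xi_{\mathrm{L}}L\sin(\theta_w)+\frac{180\, b}{\pi}\,\frac{\mathcal{G}(\theta_w)}{|L-d_w\cos(\theta_w)|}\left[1-p_b(d_w,\theta_w)\right]=0,$$ where $\mathcal{G}(\theta_w)=(L^2+d_w^2)\cos(\theta_w)-d_wL\left[1+\cos^2(\theta_w)\right]$. Moreover, $\theta_w^\circ(d_w)$ lies in the closed interval $[0,\arccos(d_w/L)]$, and $\partial f(d_w,\theta_w)/\partial\theta_w<0$ for $\arccos(d_w/L)\le\theta_w\le\pi/2$.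
   Context: Geometric setting: Willie and Bob are ground points at distance $L>0$; a UAV lies in the vertical plane through them, on Bob's side, at distance $d_w>0$ from Willie and at elevation angle $\theta_w\in[0,\pi/2]$ (radians) seen from Willie. Define $d_b(d_w,\theta_w)=\sqrt{L^2+d_w^2-2d_wL\cos(\theta_w)}$, $$p_b(d_w,\theta_w)=\frac{1}{1+a\exp\!\left(-b\left[\frac{180}{\pi}\arcsin\!\left(\frac{d_w\sin(\theta_w)}{d_b(d_w,\theta_w)}\right)-a\right]\right)},$$ and $f(d_w,\theta_w)=d_b(d_w,\theta_w)^{\xi_{\mathrm{L}}}\,p_b(d_w,\theta_w)$, with $\xi_{\mathrm{L}}<0$ a path-loss exponent and $a,b>0$ environment constants. *)

(* Defs.v *)
From Stdlib Require Import Reals.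
From Coquelicot Require Import Coquelicot.
Open Scope R_scope.

Definition d_b (L dw th : R) : R :=
  sqrt (L ^ 2 + dw ^ 2 - 2 * dw * L * cos th).

(* LoS probability p_b(d_w, theta_w); elevation angle converted to degrees *)
Definition p_b (L a b dw th : R) : R :=
  1 / (1 + a * exp (- b * (180 / PI * asin (dw * sin th / d_b L dw th) - a))).

Definition fobj (L xi a b dw th : R) : R :=
  Rpower (d_b L dw th) xi * p_b L a b dw th.

Definition G (L dw th : R) : R :=
  (L ^ 2 + dw ^ 2) * cos th - dw * L * (1 + (cos th) ^ 2).

Definition stat_eq (L xi a b dw th : R) : R :=
  xi * L * sin th
  + 180 * b / PI * (G L dw th / Rabs (L - dw * cos th)) * (1 - p_b L a b dw th).

(* Main.v *)
Require Import Defs.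
From Stdlib Require Import Reals Lra.
From Coquelicot Require Import Coquelicot.
Open Scope R_scope.

Lemma db_pos L dw t : 0 < dw -> dw < L -> 0 < d_b L dw t.
Proof.
  intros h1 h2. unfold d_b. apply sqrt_lt_R0.
  pose proof (COS_bound t). assert (0 <= dw * L * (1 - cos t)) by (apply Rmult_le_pos; nra).
  nra.
Qed.

Lemma db_sq L dw t : 0 < dw -> dw < L -> d_b L dw t ^ 2 = L ^ 2 + dw ^ 2 - 2 * dw * L * cos t.
Proof.
  intros h1 h2. unfold d_b. apply pow2_sqrt.
  pose proof (COS_bound t). assert (0 <= dw * L * (1 - cos t)) by (apply Rmult_le_pos; nra).
  nra.
Qed.

Lemma Lc_pos L dw t : 0 < dw -> dw < L -> 0 < L - dw * cos t.
Proof. intros h1 h2. pose proof (COS_bound t). nra. Qed.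

Lemma sin2 t : sin t ^ 2 = 1 - cos t ^ 2.
Proof. pose proof (sin2_cos2 t). unfold Rsqr in H. nra. Qed.

Lemma u_sq L dw t : 0 < dw -> dw < L ->
  1 - (dw * sin t / d_b L dw t) ^ 2 = ((L - dw * cos t) / d_b L dw t) ^ 2.
Proof.
  intros h1 h2. pose proof (db_pos L dw t h1 h2). pose proof (db_sq L dw t h1 h2).
  replace (1 - (dw * sin t / d_b L dw t) ^ 2) with
    ((d_b L dw t ^ 2 - (dw * sin t)^2) / d_b L dw t ^ 2) by (field; lra).
  rewrite H0. replace (((L - dw * cos t) / d_b L dw t) ^ 2) with ((L - dw * cos t) ^2 / d_b L dw t ^ 2)
    by (field; lra).
  rewrite H0. unfold Rdiv. f_equal. rewrite Rpow_mult_distr, sin2. ring.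
Qed.

Lemma u_bound L dw t : 0 < dw -> dw < L -> -1 < dw * sin t / d_b L dw t < 1.
Proof.
  intros h1 h2. pose proof (u_sq L dw t h1 h2).
  pose proof (Lc_pos L dw t h1 h2). pose proof (db_pos L dw t h1 h2).
  assert (0 < ((L - dw * cos t) / d_b L dw t) ^ 2).
  { apply pow_lt. apply Rdiv_lt_0_compat; lra. }
  set (u := dw * sin t / d_b L dw t) in *. nra.
Qed.

Lemma sqrt_u L dw t : 0 < dw -> dw < L ->
  sqrt (1 - (dw * sin t / d_b L dw t)²) = (L - dw * cos t) / d_b L dw t.
Proof.
  intros h1 h2. unfold Rsqr. replace (1 - _ * _) with (1 - (dw * sin t / d_b L dw t) ^ 2) by ring.
  rewrite u_sq by auto. apply sqrt_pow2.
  pose proof (Lc_pos L dw t h1 h2). pose proof (db_pos L dw t h1 h2).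
  apply Rlt_le, Rdiv_lt_0_compat; lra.
Qed.

Definition phi L dw t := asin (dw * sin t / d_b L dw t).

Lemma u_der L dw t : 0 < dw -> dw < L ->
  is_derive (fun t => dw * sin t / d_b L dw t) t
    (dw * (L * cos t - dw) * (L - dw * cos t) / d_b L dw t ^ 3).
Proof.
  intros h1 h2. pose proof (db_pos L dw t h1 h2). pose proof (db_sq L dw t h1 h2).
  pose proof (COS_bound t).
  unfold d_b. auto_derive.
  - assert (0 < L * (L * 1) + dw * (dw * 1) + - (2 * dw * L * cos t)) 
      by (replace (L * (L * 1) + dw * (dw * 1) + - (2 * dw * L * cos t)) with (d_b L dw t ^ 2)
            by (rewrite H0; ring); apply pow_lt; lra).
    repeat split; auto. apply Rgt_not_eq, sqrt_lt_R0; auto.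
  - fold (d_b L dw t).
    replace (sqrt (L * (L * 1) + dw * (dw * 1) + - (2 * dw * L * cos t))) with (d_b L dw t)
      by (unfold d_b; f_equal; ring).
    set (r := d_b L dw t) in *.
    transitivity ((dw * cos t * r ^ 2 - dw ^ 2 * L * sin t ^ 2) / r ^ 3).
    + field. lra.
    + rewrite H0, sin2. unfold Rdiv. f_equal. ring.
Qed.

Lemma phi_der L dw t : 0 < dw -> dw < L ->
  is_derive (phi L dw) t (dw * (L * cos t - dw) / d_b L dw t ^ 2).
Proof.
  intros h1 h2. pose proof (db_pos L dw t h1 h2). pose proof (Lc_pos L dw t h1 h2).
  pose proof (u_bound L dw t h1 h2).
  assert (Ha : is_derive asin (dw * sin t / d_b L dw t) (1 / sqrt (1 - (dw * sin t / d_b L dw t)²))).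
  { apply is_derive_Reals. apply (derive_pt_eq _ _ _ (derivable_pt_asin _ H1)).
    apply derive_pt_asin. }
  pose proof (is_derive_comp asin (fun t => dw * sin t / d_b L dw t) t _ _ Ha (u_der L dw t h1 h2)) as Hc.
  rewrite sqrt_u in Hc by auto.
  unfold phi. replace (dw * (L * cos t - dw) / d_b L dw t ^ 2) with
    (scal (dw * (L * cos t - dw) * (L - dw * cos t) / d_b L dw t ^ 3)
       (1 / ((L - dw * cos t) / d_b L dw t))).
  exact Hc.
  unfold scal; simpl; unfold mult; simpl. field. lra.
Qed.

Definition hfun a b y := 1 / (1 + a * exp (- b * (180 / PI * y - a))).

Lemma hfun_bounds a b y : 0 < a -> 0 < hfun a b y < 1.
Proof.
  intros ha. unfold hfun. pose proof (exp_pos (- b * (180 / PI * y - a))).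
  assert (0 < a * exp (- b * (180 / PI * y - a))) by (apply Rmult_lt_0_compat; auto).
  split. apply Rdiv_lt_0_compat; lra.
  apply (Rmult_lt_reg_r (1 + a * exp (- b * (180 / PI * y - a)))); [lra|].
  field_simplify; lra.
Qed.

Lemma hfun_der a b y : 0 < a ->
  is_derive (hfun a b) y (hfun a b y * (1 - hfun a b y) * (b * (180 / PI))).
Proof.
  intros ha. pose proof PI_RGT_0. pose proof (exp_pos (- b * (180 / PI * y - a))).
  assert (0 < a * exp (- b * (180 / PI * y - a))) by (apply Rmult_lt_0_compat; auto).
  unfold hfun. auto_derive;
  replace (180 / PI * y + - a) with (180 / PI * y - a) by ring;
  set (E := exp (- b * (180 / PI * y - a))) in *.
  - lra.
  - field. split; lra.
Qed.

Lemma pb_der L a b dw t : 0 < a -> 0 < dw -> dw < L ->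
  is_derive (fun t => p_b L a b dw t) t
   (dw * (L * cos t - dw) / d_b L dw t ^ 2 *
     (p_b L a b dw t * (1 - p_b L a b dw t) * (b * (180 / PI)))).
Proof.
  intros ha h1 h2.
  exact (is_derive_comp (hfun a b) (phi L dw) t _ _ (hfun_der a b _ ha) (phi_der L dw t h1 h2)).
Qed.

Lemma pb_bounds L a b dw t : 0 < a -> 0 < p_b L a b dw t < 1.
Proof. intros; apply (hfun_bounds a b (phi L dw t)); auto. Qed.

Lemma rp_der L xi dw t : 0 < dw -> dw < L ->
  is_derive (fun t => Rpower (d_b L dw t) xi) t
    (Rpower (d_b L dw t) xi * (xi * dw * L * sin t / d_b L dw t ^ 2)).
Proof.
  intros h1 h2. pose proof (db_pos L dw t h1 h2). pose proof (db_sq L dw t h1 h2).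
  pose proof (COS_bound t).
  unfold Rpower, d_b. auto_derive.
  - assert (0 < L * (L * 1) + dw * (dw * 1) + - (2 * dw * L * cos t))
      by (replace (L * (L * 1) + dw * (dw * 1) + - (2 * dw * L * cos t)) with (d_b L dw t ^ 2)
            by (rewrite H0; ring); apply pow_lt; lra).
    repeat split; auto; try apply sqrt_lt_R0; auto.
  - replace (sqrt (L * (L * 1) + dw * (dw * 1) + - (2 * dw * L * cos t))) with (d_b L dw t)
      by (unfold d_b; f_equal; ring).
    fold (d_b L dw t). field. lra.
Qed.

Definition S L xi a b dw t :=
  xi * L * sin t + 180 * b / PI * (L * cos t - dw) * (1 - p_b L a b dw t).

Lemma stat_S L xi a b dw t : 0 < dw -> dw < L -> stat_eq L xi a b dw t = S L xi a b dw t.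
Proof.
  intros h1 h2. pose proof (Lc_pos L dw t h1 h2).
  unfold stat_eq, S, G. rewrite Rabs_right by lra. f_equal. f_equal. f_equal.
  field. lra.
Qed.

Lemma f_der L xi a b dw t : 0 < a -> 0 < dw -> dw < L ->
  is_derive (fun s => fobj L xi a b dw s) t
    (fobj L xi a b dw t * (dw / d_b L dw t ^ 2) * S L xi a b dw t).
Proof.
  intros ha h1 h2. pose proof (db_pos L dw t h1 h2). pose proof PI_RGT_0.
  pose proof (is_derive_mult _ _ t _ _ (rp_der L xi dw t h1 h2) (pb_der L a b dw t ha h1 h2)) as Hm.
  unfold fobj.
  replace (Rpower (d_b L dw t) xi * p_b L a b dw t * (dw / d_b L dw t ^ 2) * S L xi a b dw t)
   with (plus (mult (Rpower (d_b L dw t) xi * (xi * dw * L * sin t / d_b L dw t ^ 2)) (p_b L a b dw t))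
      (mult (Rpower (d_b L dw t) xi) (dw * (L * cos t - dw) / d_b L dw t ^ 2 *
     (p_b L a b dw t * (1 - p_b L a b dw t) * (b * (180 / PI)))))).
  - apply Hm. intros; apply Rmult_comm.
  - unfold plus, mult; simpl. unfold S. field. lra.
Qed.

Lemma A_facts L dw : 0 < dw -> dw < L ->
  0 < acos (dw / L) < PI / 2 /\ cos (acos (dw / L)) = dw / L.
Proof.
  intros h1 h2. assert (0 < dw / L < 1).
  { split. apply Rdiv_lt_0_compat; lra. apply (Rmult_lt_reg_r L); [lra|]. field_simplify; lra. }
  pose proof (acos_bound (dw / L)). pose proof PI_RGT_0.
  assert (Hc : cos (acos (dw / L)) = dw / L) by (apply cos_acos; lra).
  split; [|auto]. split.
  - destruct (Rle_lt_or_eq_dec 0 (acos (dw / L))) as [h|h]; [lra|auto|].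
    rewrite <- h, cos_0 in Hc. lra.
  - destruct (Rlt_or_le (acos (dw / L)) (PI / 2)) as [h|h]; auto.
    destruct (Rle_lt_or_eq_dec (PI / 2) (acos (dw / L)) h) as [h'|h'].
    + pose proof (cos_lt_0 (acos (dw / L)) h' ltac:(lra)). lra.
    + rewrite <- h', cos_PI2 in Hc. lra.
Qed.

Lemma cos_geA L dw t : 0 < dw -> dw < L -> 0 <= t <= acos (dw / L) -> dw / L <= cos t.
Proof.
  intros h1 h2 ht. destruct (A_facts L dw h1 h2) as [hA hc]. pose proof PI_RGT_0.
  destruct (Rle_lt_or_eq_dec t (acos (dw / L))) as [h|h]; [lra| |].
  - rewrite <- hc. left. apply cos_decreasing_1; lra.
  - rewrite h, hc. lra.
Qed.

Lemma cos_leA L dw t : 0 < dw -> dw < L -> acos (dw / L) <= t <= PI -> cos t <= dw / L.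
Proof.
  intros h1 h2 ht. destruct (A_facts L dw h1 h2) as [hA hc]. pose proof PI_RGT_0.
  destruct (Rle_lt_or_eq_dec (acos (dw / L)) t) as [h|h]; [lra| |].
  - rewrite <- hc. left. apply cos_decreasing_1; lra.
  - rewrite <- h, hc. lra.
Qed.

Lemma fobj_pos L xi a b dw t : 0 < a -> 0 < fobj L xi a b dw t.
Proof.
  intros ha. unfold fobj, Rpower. apply Rmult_lt_0_compat. apply exp_pos.
  apply (pb_bounds L a b dw t ha).
Qed.

Lemma pb_mono L a b dw x y : 0 < a -> 0 < b -> 0 < dw -> dw < L ->
  0 <= x -> x <= y -> y <= acos (dw / L) -> p_b L a b dw x <= p_b L a b dw y.
Proof.
  intros ha hb h1 h2 hx hxy hy.
  destruct (Rle_lt_or_eq_dec x y hxy) as [h|h]; [|subst; lra].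
  destruct (MVT_cor2 (fun t => p_b L a b dw t)
     (fun t => dw * (L * cos t - dw) / d_b L dw t ^ 2 *
     (p_b L a b dw t * (1 - p_b L a b dw t) * (b * (180 / PI)))) x y h) as [c [Hc1 Hc2]].
  { intros c _. apply is_derive_Reals. apply pb_der; auto. }
  assert (0 <= dw * (L * cos c - dw) / d_b L dw c ^ 2 *
     (p_b L a b dw c * (1 - p_b L a b dw c) * (b * (180 / PI)))).
  { pose proof (cos_geA L dw c h1 h2 ltac:(lra)).
    assert (0 <= L * cos c - dw).
    { assert (dw = L * (dw / L)) by (field; lra). nra. }
    pose proof (db_pos L dw c h1 h2). pose proof (pb_bounds L a b dw c ha). pose proof PI_RGT_0.
    assert (0 <= dw * (L * cos c - dw) / d_b L dw c ^ 2).
    { unfold Rdiv. apply Rmult_le_pos. apply Rmult_le_pos; lra.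
      left; apply Rinv_0_lt_compat, pow_lt; lra. }
    assert (0 < b * (180 / PI)).
    { apply Rmult_lt_0_compat; [lra|]. unfold Rdiv. apply Rmult_lt_0_compat; [lra|].
      apply Rinv_0_lt_compat; lra. }
    assert (0 < p_b L a b dw c * (1 - p_b L a b dw c)) by (apply Rmult_lt_0_compat; lra).
    apply Rmult_le_pos; auto. apply Rmult_le_pos; lra. }
  nra.
Qed.

Lemma K_pos b : 0 < b -> 0 < 180 * b / PI.
Proof. intros. pose proof PI_RGT_0. unfold Rdiv. apply Rmult_lt_0_compat; [lra|].
  apply Rinv_0_lt_compat; lra. Qed.

Lemma S_decr L xi a b dw x y : 0 < L -> xi < 0 -> 0 < a -> 0 < b -> 0 < dw -> dw < L ->
  0 <= x -> x < y -> y <= acos (dw / L) -> S L xi a b dw y < S L xi a b dw x.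
Proof.
  intros hL hxi ha hb h1 h2 hx hxy hy.
  destruct (A_facts L dw h1 h2) as [hA hc]. pose proof PI_RGT_0.
  assert (hs : sin x < sin y) by (apply sin_increasing_1; lra).
  assert (hcos : cos y < cos x) by (apply cos_decreasing_1; lra).
  pose proof (cos_geA L dw y h1 h2 ltac:(lra)).
  assert (hy0 : 0 <= L * cos y - dw) by (assert (dw = L * (dw / L)) by (field; lra); nra).
  pose proof (pb_mono L a b dw x y ha hb h1 h2 hx ltac:(lra) hy).
  pose proof (pb_bounds L a b dw y ha). pose proof (K_pos b hb).
  unfold S.
  set (K := 180 * b / PI) in *. set (px := p_b L a b dw x) in *. set (py := p_b L a b dw y) in *.
  assert (xi * L * sin y < xi * L * sin x).
  { assert (xi * L < 0) by nra. nra. }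
  assert ((L * cos y - dw) * (1 - py) <= (L * cos x - dw) * (1 - px)).
  { apply Rmult_le_compat; nra. }
  nra.
Qed.

Lemma S_neg L xi a b dw t : 0 < L -> xi < 0 -> 0 < a -> 0 < b -> 0 < dw -> dw < L ->
  acos (dw / L) <= t <= PI / 2 -> S L xi a b dw t < 0.
Proof.
  intros hL hxi ha hb h1 h2 ht.
  destruct (A_facts L dw h1 h2) as [hA hc]. pose proof PI_RGT_0.
  pose proof (cos_leA L dw t h1 h2 ltac:(lra)).
  assert (hy0 : L * cos t - dw <= 0) by (assert (dw = L * (dw / L)) by (field; lra); nra).
  assert (0 < sin t) by (apply sin_gt_0; lra).
  pose proof (pb_bounds L a b dw t ha). pose proof (K_pos b hb).
  unfold S. set (K := 180 * b / PI) in *. set (p := p_b L a b dw t) in *.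
  assert (xi * L < 0) by nra.
  assert (0 <= K * (1 - p)) by nra.
  nra.
Qed.

Lemma S_0 L xi a b dw : 0 < a -> 0 < b -> 0 < dw -> dw < L -> 0 < S L xi a b dw 0.
Proof.
  intros ha hb h1 h2. unfold S. rewrite sin_0, cos_0.
  pose proof (pb_bounds L a b dw 0 ha). pose proof (K_pos b hb).
  set (K := 180 * b / PI) in *. set (p := p_b L a b dw 0) in *.
  assert (0 < K * (1 - p)) by nra. nra.
Qed.

Lemma S_cont L xi a b dw : 0 < a -> 0 < dw -> dw < L -> continuity (fun t => - S L xi a b dw t).
Proof.
  intros ha h1 h2 x.
  assert (Hp : continuity_pt (fun t => p_b L a b dw t) x).
  { apply derivable_continuous_pt. eexists. apply is_derive_Reals. apply pb_der; auto. }
  unfold S.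
  apply (continuity_pt_opp (fun t => xi * L * sin t + 180 * b / PI * (L * cos t - dw) * (1 - p_b L a b dw t))).
  apply (continuity_pt_plus (fun t => xi * L * sin t) (fun t => 180 * b / PI * (L * cos t - dw) * (1 - p_b L a b dw t))).
  - apply (continuity_pt_mult (fun _ => xi * L) sin). apply continuity_pt_const; intros ? ?; auto.
    apply continuity_sin.
  - apply (continuity_pt_mult (fun t => 180 * b / PI * (L * cos t - dw)) (fun t => 1 - p_b L a b dw t)).
    + apply (continuity_pt_mult (fun _ => 180 * b / PI) (fun t => L * cos t - dw)).
      apply continuity_pt_const; intros ? ?; auto.
      apply (continuity_pt_minus (fun t => L * cos t) (fun _ => dw)).
      apply (continuity_pt_mult (fun _ => L) cos). apply continuity_pt_const; intros ? ?; auto.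
      apply continuity_cos. apply continuity_pt_const; intros ? ?; auto.
    + apply (continuity_pt_minus (fun _ => 1) (fun t => p_b L a b dw t)).
      apply continuity_pt_const; intros ? ?; auto. auto.
Qed.

Lemma fder_pos_factor L xi a b dw c : 0 < a -> 0 < dw -> dw < L ->
  0 < fobj L xi a b dw c * (dw / d_b L dw c ^ 2).
Proof.
  intros ha h1 h2. pose proof (db_pos L dw c h1 h2).
  apply Rmult_lt_0_compat. apply fobj_pos; auto.
  unfold Rdiv; apply Rmult_lt_0_compat; auto. apply Rinv_0_lt_compat, pow_lt; lra.
Qed.

Theorem lemma2 (L xi a b dw : R)
  (hL : 0 < L) (hxi : xi < 0) (ha : 0 < a) (hb : 0 < b)
  (hdw0 : 0 < dw) (hdwL : dw < L) :
  exists th : R,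
    (0 <= th <= PI / 2 /\
     forall t, 0 <= t <= PI / 2 -> fobj L xi a b dw t <= fobj L xi a b dw th) /\
    (forall th', (0 <= th' <= PI / 2 /\
                  forall t, 0 <= t <= PI / 2 -> fobj L xi a b dw t <= fobj L xi a b dw th') ->
                 th' = th) /\
    stat_eq L xi a b dw th = 0 /\
    (forall t, 0 <= t <= PI / 2 -> stat_eq L xi a b dw t = 0 -> t = th) /\
    0 <= th <= acos (dw / L) /\
    (forall t, acos (dw / L) <= t <= PI / 2 ->
       ex_derive (fun s => fobj L xi a b dw s) t /\
       Derive (fun s => fobj L xi a b dw s) t < 0).
Proof.
  destruct (A_facts L dw hdw0 hdwL) as [hA hc]. pose proof PI_RGT_0.
  pose proof (S_0 L xi a b dw ha hb hdw0 hdwL).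
  pose proof (S_neg L xi a b dw (acos (dw / L)) hL hxi ha hb hdw0 hdwL ltac:(lra)).
  destruct (IVT (fun t => - S L xi a b dw t) 0 (acos (dw / L)) (S_cont L xi a b dw ha hdw0 hdwL)
     ltac:(lra) ltac:(lra) ltac:(lra)) as [th [Hth HS]].
  assert (HS0 : S L xi a b dw th = 0) by lra. clear HS.
  assert (Hpos : forall c, 0 <= c < th -> 0 < S L xi a b dw c).
  { intros c hc'. pose proof (S_decr L xi a b dw c th hL hxi ha hb hdw0 hdwL ltac:(lra) ltac:(lra) ltac:(lra)). lra. }
  assert (Hneg : forall c, th < c <= PI / 2 -> S L xi a b dw c < 0).
  { intros c hc'. destruct (Rle_or_lt c (acos (dw / L))).
    - pose proof (S_decr L xi a b dw th c hL hxi ha hb hdw0 hdwL ltac:(lra) ltac:(lra) ltac:(lra)). lra.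
    - apply S_neg; auto; lra. }
  set (f' := fun c => fobj L xi a b dw c * (dw / d_b L dw c ^ 2) * S L xi a b dw c).
  assert (Hd : forall c, derivable_pt_lim (fun s => fobj L xi a b dw s) c (f' c)).
  { intros c. apply is_derive_Reals. apply f_der; auto. }
  assert (Hstrict : forall t, 0 <= t <= PI / 2 -> t <> th -> fobj L xi a b dw t < fobj L xi a b dw th).
  { intros t ht hne. destruct (Rlt_or_le t th) as [hlt|hle].
    - destruct (MVT_cor2 _ f' t th hlt (fun c _ => Hd c)) as [c [Hc1 Hc2]].
      pose proof (Hpos c ltac:(lra)). pose proof (fder_pos_factor L xi a b dw c ha hdw0 hdwL).
      assert (Hx : 0 < f' c * (th - t)) by (unfold f'; apply Rmult_lt_0_compat; [apply Rmult_lt_0_compat|]; lra).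
      lra.
    - assert (hlt : th < t) by lra.
      destruct (MVT_cor2 _ f' th t hlt (fun c _ => Hd c)) as [c [Hc1 Hc2]].
      pose proof (Hneg c ltac:(lra)). pose proof (fder_pos_factor L xi a b dw c ha hdw0 hdwL).
      assert (f' c * (t - th) < 0).
      { unfold f'. assert (fobj L xi a b dw c * (dw / d_b L dw c ^ 2) * S L xi a b dw c < 0) by nra. nra. }
      lra. }
  exists th. split; [|split; [|split; [|split; [|split]]]].
  - split; [lra|]. intros t ht. destruct (Req_dec t th) as [->|hne]; [lra|].
    left; apply Hstrict; auto.
  - intros th' [h1 h2]. destruct (Req_dec th' th) as [|hne]; auto.
    pose proof (Hstrict th' h1 hne). pose proof (h2 th ltac:(lra)). lra.
  - rewrite stat_S; auto.
  - intros t ht h0. rewrite stat_S in h0 by auto.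
    destruct (Rtotal_order t th) as [h|[h|h]]; auto.
    + pose proof (Hpos t ltac:(lra)). lra.
    + pose proof (Hneg t ltac:(lra)). lra.
  - lra.
  - intros t ht. split.
    + eexists. apply f_der; auto.
    + replace (Derive (fun s => fobj L xi a b dw s) t) with
        (fobj L xi a b dw t * (dw / d_b L dw t ^ 2) * S L xi a b dw t)
        by (symmetry; apply is_derive_unique, f_der; auto).
      pose proof (fder_pos_factor L xi a b dw t ha hdw0 hdwL).
      pose proof (S_neg L xi a b dw t hL hxi ha hb hdw0 hdwL ht). nra.
Qed.
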